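(* Let $m,n\ge 2$ and let $RC(3,m,n)$ be the set of all real vectors $\{P(a,b,c|x,y,z)\}_{a,b,c\in\{1,\dots,n\},\,x,y,z\in\{1,\dots,m\}}$ satisfying $P(a,b,c|x,y,z)\ge 0$, $\sum_{a,b,c}P(a,b,c|x,y,z)=1$ for all $x,y,z$, and the relativistic causal constraints: (i) $\sum_a P(a,b,c|x,y,z)=\sum_a P(a,b,c|x',y,z)$ for all $x,x',y,z,b,c$; (ii) $\sum_c P(a,b,c|x,y,z)=\sum_c P(a,b,c|x,y,z')$ for all $z,z',x,y,a,b$; (iii) $\sum_{b,c} P(a,b,c|x,y,z)=\sum_{b,c} P(a,b,c|x,y',z')$ for all $y,y',z,z',x,a$; (iv) $\sum_{a,b} P(a,b,c|x,y,z)=\sum_{a,b} P(a,b,c|x',y',z)$ for all $x,x',y,y',z,c$. Then the dimension of the polytope $RC(3,m,n)$ (i.e. of its affine hull in $\mathbb{R}^{(mn)^3}$) equals $$[m(n-1)+1]^{3}+m^{2}(m-1)(n-1)^{2}-1.$$ *)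

(* Defs.v *)
From HB Require Import structures.
From mathcomp Require Import all_boot all_order all_algebra.
From mathcomp Require Import reals.
Set Implicit Arguments. Unset Strict Implicit. Unset Printing Implicit Defensive.
Import Order.TTheory GRing.Theory Num.Theory.
Local Open Scope ring_scope.

Definition idx (m n : nat) : finType :=
  ('I_n * 'I_n * 'I_n * ('I_m * 'I_m * 'I_m))%type.

Definition pt (R : realType) (m n : nat) := {ffun idx m n -> R^o}.

Definition PP (R : realType) m n (p : pt R m n) a b c x y z : R :=
  p ((a, b, c), (x, y, z)).

Definition RC (R : realType) (m n : nat) (p : pt R m n) : Prop :=
  (forall a b c x y z, 0 <= PP p a b c x y z) /\
  (forall x y z, \sum_a \sum_b \sum_c PP p a b c x y z = 1) /\
  [/\ (forall x x' y z b c,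
          \sum_a PP p a b c x y z = \sum_a PP p a b c x' y z),
      (forall z z' x y a b,
          \sum_c PP p a b c x y z = \sum_c PP p a b c x y z'),
      (forall y y' z z' x a,
          \sum_b \sum_c PP p a b c x y z = \sum_b \sum_c PP p a b c x y' z')
    & (forall x x' y y' z c,
          \sum_a \sum_b PP p a b c x y z = \sum_a \sum_b PP p a b c x' y' z)].

(* Affine dimension: S has affine-hull dimension d iff the linear span U of
   all differences p - q (p, q in S) -- the direction space of aff(S) --
   has dimension d. *)
Definition affine_dim (F : fieldType) (vT : vectType F) (S : vT -> Prop)
    (d : nat) : Prop :=
  exists U : {vspace vT},
    [/\ (forall p q, S p -> S q -> p - q \in U),
        (exists s : seq (vT * vT),
            (forall pq, pq \in s -> S pq.1 /\ S pq.2) /\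
            U = <<[seq pq.1 - pq.2 | pq <- s]>>%VS)
      & \dim U = d].

(* Main.v *)
Require Import Defs.
From HB Require Import structures.
From mathcomp Require Import all_boot all_order all_algebra ring lra.
From mathcomp Require Import reals.
Set Implicit Arguments. Unset Strict Implicit. Unset Printing Implicit Defensive.
Import Order.TTheory GRing.Theory Num.Theory.
Local Open Scope ring_scope.

Section Inj.
Variable R : realType.
Variable n : nat.

Definition sel (al a : 'I_n.+1) := (al == ord_max) || (a == al).

Lemma sel_max a : sel ord_max a.
Proof. by rewrite /sel eqxx. Qed.

Lemma sum_sel_max (F : 'I_n.+1 -> R) : \sum_(a | sel ord_max a) F a = \sum_a F a.
Proof. by apply: eq_bigl => a; rewrite sel_max. Qed.

Lemma inj1 (h : 'I_n.+1 -> R) :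
  (forall al, \sum_(a | sel al a) h a = 0) -> forall a, h a = 0.
Proof.
move=> H.
have Hn : forall a, a != ord_max -> h a = 0.
  move=> a na; rewrite -(H a) /sel (negbTE na) /=.
  by rewrite (big_pred1_eq _ a).
move=> a; have [->|na] := eqVneq a ord_max; last exact: Hn.
have := H ord_max; rewrite sum_sel_max (bigD1 ord_max) //= big1 ?addr0 //.
Qed.

Lemma inj2 (h : 'I_n.+1 -> 'I_n.+1 -> R) :
  (forall al be, \sum_(a | sel al a) \sum_(b | sel be b) h a b = 0) ->
  forall a b, h a b = 0.
Proof.
move=> H a b; move: b; apply: inj1 => be.
by move: a; apply: inj1 => al; apply: H.
Qed.

Lemma inj3 (h : 'I_n.+1 -> 'I_n.+1 -> 'I_n.+1 -> R) :
  (forall al be ga, \sum_(a | sel al a) \sum_(b | sel be b) \sum_(c | sel ga c) h a b c = 0) ->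
  forall a b c, h a b c = 0.
Proof.
move=> H a b c; move: b c; apply: inj2 => be ga.
by move: a; apply: inj1 => al; apply: H.
Qed.
End Inj.

Section TT.
Variable R : realType.
Variables m n : nat.
Notation I := (idx m.+1 n.+1).
Notation PT := (pt R m.+1 n.+1).

Lemma sum_lin (J : finType) (P : pred J) (F G : J -> R^o) (k : R) :
  \sum_(i | P i) (k *: F i + G i) = k *: \sum_(i|P i) F i + \sum_(i|P i) G i.
Proof. by rewrite big_split scaler_sumr. Qed.

Definition Tf (f : PT) : PT :=
  [ffun i : I => let: ((al,be,ga),(x,y,z)) := i in
     \sum_(a | sel al a) \sum_(b | sel be b) \sum_(c | sel ga c) f ((a,b,c),(x,y,z))].

Lemma Tf_lin : linear Tf.
Proof.
move=> k f g; apply/ffunP => [[[[al be] ga] [[x y] z]]]; rewrite !ffunE /=.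
under eq_bigr do under eq_bigr do under eq_bigr do rewrite !ffunE.
under eq_bigr do under eq_bigr do rewrite sum_lin.
under eq_bigr do rewrite sum_lin.
by rewrite sum_lin.
Qed.

Lemma Tf_inj f : Tf f = 0 -> f = 0.
Proof.
move=> H; apply/ffunP => [[[[a b] c] [[x y] z]]]; rewrite ffunE.
move: a b c; apply: inj3 => al be ga.
by have := congr1 (fun F : PT => F ((al,be,ga),(x,y,z))) H; rewrite !ffunE.
Qed.


Notation l := (@ord_max n).

Definition sat (p : PT) (k : R) : Prop :=
  (forall x y z, \sum_a \sum_b \sum_c PP p a b c x y z = k) /\
  [/\ (forall x x' y z b c,
          \sum_a PP p a b c x y z = \sum_a PP p a b c x' y z),
      (forall z z' x y a b,
          \sum_c PP p a b c x y z = \sum_c PP p a b c x y z'),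
      (forall y y' z z' x a,
          \sum_b \sum_c PP p a b c x y z = \sum_b \sum_c PP p a b c x y' z')
    & (forall x x' y y' z c,
          \sum_a \sum_b PP p a b c x y z = \sum_a \sum_b PP p a b c x' y' z)].

Definition Hp (F : PT) : Prop :=
 [/\ forall x y z, F ((l,l,l),(x,y,z)) = 0,
     forall x x' y z b c, F((l,b,c),(x,y,z)) = F((l,b,c),(x',y,z)),
     forall z z' x y a b, F((a,b,l),(x,y,z)) = F((a,b,l),(x,y,z')),
     forall y y' z z' x a, F((a,l,l),(x,y,z)) = F((a,l,l),(x,y',z')) &
     forall x x' y y' z c, F((l,l,c),(x,y,z)) = F((l,l,c),(x',y',z))].

Lemma xch3 (P Q S : pred 'I_n.+1) (F : 'I_n.+1 -> 'I_n.+1 -> 'I_n.+1 -> R) :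
  \sum_(a|P a)\sum_(b|Q b)\sum_(c|S c) F a b c =
  \sum_(b|Q b)\sum_(c|S c)\sum_(a|P a) F a b c.
Proof. by rewrite exchange_big; apply: eq_bigr => b _; rewrite exchange_big. Qed.

Lemma xch3' (P Q S : pred 'I_n.+1) (F : 'I_n.+1 -> 'I_n.+1 -> 'I_n.+1 -> R) :
  \sum_(a|P a)\sum_(b|Q b)\sum_(c|S c) F a b c =
  \sum_(c|S c)\sum_(a|P a)\sum_(b|Q b) F a b c.
Proof. by under eq_bigr do rewrite exchange_big; rewrite exchange_big. Qed.

Lemma easy_dir f : sat f 0 -> Hp (Tf f).
Proof.
move=> [H0 [Hi Hii Hiii Hiv]]; split.
- by move=> x y z; rewrite ffunE /= /sel eqxx /=; exact: H0.
- move=> x x' y z b c; rewrite !ffunE /= /sel eqxx /= [LHS]xch3 [RHS]xch3.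
  by apply: eq_bigr => b' _; apply: eq_bigr => c' _; exact: Hi.
- move=> z z' x y a b; rewrite !ffunE /= /sel eqxx /=.
  by apply: eq_bigr => a' _; apply: eq_bigr => b' _; exact: Hii.
- move=> y y' z z' x a; rewrite !ffunE /= /sel eqxx /=.
  by apply: eq_bigr => a' _; exact: Hiii.
- move=> x x' y y' z c; rewrite !ffunE /= /sel eqxx /= [LHS]xch3' [RHS]xch3'.
  by apply: eq_bigr => c' _; exact: Hiv.
Qed.

Lemma sumrB2 (P Q : pred 'I_n.+1) (F G : 'I_n.+1 -> 'I_n.+1 -> R) :
  \sum_(a|P a)\sum_(b|Q b) (F a b - G a b) =
  \sum_(a|P a)\sum_(b|Q b) F a b - \sum_(a|P a)\sum_(b|Q b) G a b.
Proof. by under eq_bigr do rewrite sumrB; rewrite sumrB. Qed.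

Lemma hard_dir f : Hp (Tf f) -> sat f 0.
Proof.
move=> [H0 Hi Hii Hiii Hiv]; split; last split.
- by move=> x y z; have := H0 x y z; rewrite ffunE /= /sel eqxx /=.
- move=> x x' y z b c; apply/eqP; rewrite -subr_eq0; apply/eqP.
  move: b c; apply: inj2 => be ga; rewrite sumrB2; apply/eqP; rewrite subr_eq0; apply/eqP.
  rewrite /sel -[LHS]xch3 -[RHS]xch3.
  by have := Hi x x' y z be ga; rewrite !ffunE /= /sel eqxx /=.
- move=> z z' x y a b; apply/eqP; rewrite -subr_eq0; apply/eqP.
  move: a b; apply: inj2 => al be; rewrite sumrB2; apply/eqP; rewrite subr_eq0; apply/eqP.
  rewrite /sel; by have := Hii z z' x y al be; rewrite !ffunE /= /sel eqxx /=.
- move=> y y' z z' x a; apply/eqP; rewrite -subr_eq0; apply/eqP.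
  move: a; apply: inj1 => al; rewrite sumrB; apply/eqP; rewrite subr_eq0; apply/eqP.
  rewrite /sel; by have := Hiii y y' z z' x al; rewrite !ffunE /= /sel eqxx /=.
- move=> x x' y y' z c; apply/eqP; rewrite -subr_eq0; apply/eqP.
  move: c; apply: inj1 => ga; rewrite sumrB; apply/eqP; rewrite subr_eq0; apply/eqP.
  rewrite /sel -[LHS]xch3' -[RHS]xch3'.
  by have := Hiv x x' y y' z ga; rewrite !ffunE /= /sel eqxx /=.
Qed.

End TT.

Section T3.
Variable R : realType.
Variables m n : nat.
Notation I := (idx m.+1 n.+1).
Notation PT := (pt R m.+1 n.+1).
Notation l := (@ord_max n).
Notation o := (@ord0 m).

Definition rr (i : I) : I := let: ((a,b,c),(x,y,z)) := i in
  ((a,b,c),(if a == l then o else x,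
            if (b == l) && ((a == l) || (c == l)) then o else y,
            if c == l then o else z)).

Definition fixb (la lb lc ex ey ez : bool) :=
  [&& la ==> ex, lc ==> ez, (lb && (la || lc)) ==> ey & ~~ [&& la, lb & lc]].

Definition fixd (i : I) : bool := let: ((a,b,c),(x,y,z)) := i in
  fixb (a==l) (b==l) (c==l) (x==o) (y==o) (z==o).

Lemma fixd_rr a b c x y z :
  fixd (rr ((a,b,c),(x,y,z))) = ~~ [&& a==l, b==l & c==l].
Proof.
rewrite /rr /fixd /fixb.
by case: (a == l); case: (b == l); case: (c == l); rewrite /= ?eqxx ?andbT ?andbF.
Qed.

Lemma fixd_id i : fixd i -> rr i = i.
Proof.
case: i => [[[a b] c] [[x y] z]]; rewrite /fixd /fixb /rr.
case: (a == l); case: (b == l); case: (c == l) => /=;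
  do ?[case/andP => /eqP <- ] => //.
Qed.


Lemma Fr (F : PT) i : Hp F -> F (rr i) = F i.
Proof.
case=> H0 Hi Hii Hiii Hiv; case: i => [[[a b] c] [[x y] z]]; rewrite /rr.
have [->|na] := eqVneq a l; have [->|nc] := eqVneq c l;
  have [->|nb] := eqVneq b l; rewrite ?eqxx ?(negbTE na) ?(negbTE nb) ?(negbTE nc) /=.
- by rewrite !H0.
- by rewrite (Hi o x y o) (Hii o z).
- exact: Hiv.
- exact: Hi.
- exact: Hiii.
- exact: Hii.
- by [].
- by [].
Qed.

Notation K := ({i : I | fixd i}).

Definition iof (g : {ffun K -> R^o}) : PT :=
  [ffun i => if insub (rr i) is Some k then g k else 0].

Lemma iof_lin : linear iof.
Proof.
move=> k f g; apply/ffunP => i; rewrite !ffunE.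
by case: (insub (rr i)) => [j|]; rewrite ?ffunE // scaler0 addr0.
Qed.

Lemma iof_inj g : iof g = 0 -> g = 0.
Proof.
move=> H; apply/ffunP => k; rewrite ffunE.
have := congr1 (fun F : PT => F (val k)) H; rewrite !ffunE fixd_id ?valP //.
by rewrite valK.
Qed.

Lemma Hp_iof g : Hp (iof g).
Proof.
split.
- by move=> x y z; rewrite ffunE insubF // fixd_rr !eqxx.
- by move=> x x' y z b c; rewrite !ffunE /rr eqxx.
- by move=> z z' x y a b; rewrite !ffunE /rr eqxx ?orbT.
- by move=> y y' z z' x a; rewrite !ffunE /rr eqxx ?orbT.
- by move=> x x' y y' z c; rewrite !ffunE /rr eqxx ?orbT.
Qed.

Lemma iof_Hp F : Hp F -> F = iof [ffun k => F (val k)].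
Proof.
move=> HF; apply/ffunP => i; rewrite ffunE.
case: insubP => [k _ Hv|Hn]; first by rewrite ffunE Hv Fr.
move: Hn; case: HF => H0 _ _ _ _.
case: i => [[[a b] c] [[x y] z]]; rewrite fixd_rr negbK.
by case/and3P => /eqP -> /eqP -> /eqP ->; rewrite H0.
Qed.

End T3.

Section T4.
Variable R : realType.
Variables m n : nat.
Notation PT := (pt R m.+1 n.+1).
Notation KK := ({i : idx m.+1 n.+1 | @fixd m n i}).

Definition TL : {linear PT -> PT} :=
  HB.pack (@Tf R m n) (GRing.isLinear.Build _ _ _ _ (@Tf R m n) (@Tf_lin R m n)).
Definition IL : {linear {ffun KK -> R^o} -> PT} :=
  HB.pack (@iof R m n) (GRing.isLinear.Build _ _ _ _ (@iof R m n) (@iof_lin R m n)).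

Definition Tl : 'End(PT) := linfun TL.
Definition Il : 'Hom({ffun KK -> R^o}, PT) := linfun IL.
Definition W := limg Il.
Definition U := (Tl @^-1: W)%VS.

Lemma memU v : v \in U <-> sat v 0.
Proof.
rewrite -memv_preim /Tl lfunE /=; split.
- case/memv_imgP => g _ Hg; apply: hard_dir; rewrite Hg lfunE /=; exact: Hp_iof.
- move=> /easy_dir /iof_Hp ->; apply/memv_imgP; exists [ffun k => Tf v (val k)].
    exact: memvf.
  by rewrite lfunE.
Qed.

Lemma Tl_ker : lker Tl = 0%VS.
Proof.
apply/eqP/lker0P => a b H.
have : Tl (a - b) = 0 by rewrite linearB /= H subrr.
rewrite lfunE /= => /Tf_inj /eqP; rewrite subr_eq0 => /eqP //.
Qed.

Lemma Il_ker : lker Il = 0%VS.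
Proof.
apply/eqP/lker0P => a b H.
have : Il (a - b) = 0 by rewrite linearB /= H subrr.
rewrite lfunE /= => /iof_inj /eqP; rewrite subr_eq0 => /eqP //.
Qed.

Lemma Tl_img : limg Tl = fullv.
Proof.
apply/eqP; rewrite eqEdim subvf /=.
have := limg_dim_eq (f:=Tl) (U:=fullv); rewrite Tl_ker capv0 => ->; done.
Qed.

Lemma dimU : \dim U = #|{: KK}|.
Proof.
have h1 : (Tl @: U)%VS = W by rewrite lpreimK // Tl_img subvf.
have := limg_dim_eq (f:=Tl) (U:=U); rewrite Tl_ker capv0 h1 => <- //.
have := limg_dim_eq (f:=Il) (U:=fullv); rewrite Il_ker capv0 => -> //.
by rewrite dimvf /dim /= muln1.
Qed.

End T4.

Local Close Scope ring_scope.

Lemma sum_pair (T1 T2 : finType) (F : T1 * T2 -> nat) :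
  \sum_(p : T1 * T2) F p = \sum_(u : T1) \sum_(v : T2) F (u, v).
Proof. by rewrite pair_bigA; apply: eq_bigr => -[u v]. Qed.

Lemma cnt_last n (F : 'I_n.+1 -> nat) : (0 < n)%N ->
  (forall a, a != ord_max -> F a = F ord0) -> \sum_a F a = F ord_max + n * F ord0.
Proof.
move=> hn H; rewrite big_ord_recr /= addnC; congr (_ + _).
rewrite (eq_bigr (fun _ => F ord0)) ?sum_nat_const ?card_ord //.
move=> i _; apply: H; apply/eqP => /(congr1 val) /=; move: (ltn_ord i).
by move=> /[swap] ->; rewrite ltnn.
Qed.

Lemma cnt_first m (F : 'I_m.+1 -> nat) : (0 < m)%N ->
  (forall a, a != ord0 -> F a = F ord_max) -> \sum_a F a = F ord0 + m * F ord_max.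
Proof.
move=> hm H; rewrite big_ord_recl /=; congr (_ + _).
rewrite (eq_bigr (fun _ => F ord_max)) ?sum_nat_const ?card_ord //.
by move=> i _; apply: H; apply/eqP => /(congr1 val).
Qed.

Lemma count_fix m n : (0 < m)%N -> (0 < n)%N ->
  #|[pred i : idx m.+1 n.+1 | fixd i]| =
  ((m.+1 * n + 1) ^ 3 + m.+1 ^ 2 * m * n ^ 2 - 1)%N.
Proof.
move=> hm hn.
have h0 : (@ord0 n == ord_max) = false.
  by apply/eqP => /(congr1 val) /= h; move: hn; rewrite -h.
have h0' : (@ord_max m == ord0) = false.
  by apply/eqP => /(congr1 val) /= h; move: hm; rewrite h.
rewrite -sum1_card big_mkcond /=.
under eq_bigr => i _ do rewrite inE.
rewrite sum_pair sum_pair sum_pair.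
under eq_bigr => a _ do under eq_bigr => b _ do under eq_bigr => c _ do rewrite sum_pair sum_pair.
do ![rewrite (@cnt_last n _ hn); last by move=> ? /negbTE ha /=; rewrite ha ?h0].
do ![rewrite (@cnt_first m _ hm); last by move=> ? /negbTE ha /=; rewrite ha ?h0'].
rewrite /= ?eqxx ?h0 ?h0' /=.
apply/eqP; rewrite -(eqn_add2r 1) subnK; first by apply/eqP; ring.
by rewrite addn_gt0 expn_gt0 addn1.
Qed.

Local Open Scope ring_scope.

Section T6.
Variable R : realType.
Variables m n : nat.
Notation PT := (pt R m.+1 n.+1).

Lemma PPlin (k : R) (p q : PT) a b c x y z :
  PP (k *: p + q) a b c x y z = k * PP p a b c x y z + PP q a b c x y z.
Proof. by rewrite /PP !ffunE. Qed.

Lemma slin (J : finType) (F G : J -> R) (k : R) :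
  \sum_j (k * F j + G j) = k * \sum_j F j + \sum_j G j.
Proof. by rewrite big_split mulr_sumr. Qed.

Lemma sat_lin (k k1 k2 : R) (p q : PT) :
  sat p k1 -> sat q k2 -> sat (k *: p + q) (k * k1 + k2).
Proof.
move=> [P0 [Pi Pii Piii Piv]] [Q0 [Qi Qii Qiii Qiv]]; split; last split.
- move=> x y z.
  under eq_bigr do under eq_bigr do under eq_bigr do rewrite PPlin.
  under eq_bigr do under eq_bigr do rewrite slin.
  under eq_bigr do rewrite slin.
  by rewrite slin P0 Q0.
- move=> x x' y z b c.
  under eq_bigr do rewrite PPlin. under [RHS]eq_bigr do rewrite PPlin.
  by rewrite !slin (Pi x x') (Qi x x').
- move=> z z' x y a b.
  under eq_bigr do rewrite PPlin. under [RHS]eq_bigr do rewrite PPlin.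
  by rewrite !slin (Pii z z') (Qii z z').
- move=> y y' z z' x a.
  under eq_bigr do under eq_bigr do rewrite PPlin.
  under [RHS]eq_bigr do under eq_bigr do rewrite PPlin.
  under eq_bigr do rewrite slin. under [RHS]eq_bigr do rewrite slin.
  by rewrite !slin (Piii y y' z z') (Qiii y y' z z').
- move=> x x' y y' z c.
  under eq_bigr do under eq_bigr do rewrite PPlin.
  under [RHS]eq_bigr do under eq_bigr do rewrite PPlin.
  under eq_bigr do rewrite slin. under [RHS]eq_bigr do rewrite slin.
  by rewrite !slin (Piv x x' y y') (Qiv x x' y y').
Qed.

Definition cc : R := (n.+1 ^ 3)%:R^-1.
Definition uu : PT := [ffun _ => cc].

Lemma cc_gt0 : 0 < cc.
Proof. by rewrite invr_gt0 ltr0n expn_gt0. Qed.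

Lemma RC_uu : RC uu.
Proof.
split; first by move=> *; rewrite /PP ffunE ltW // cc_gt0.
split; last split.
- move=> x y z; rewrite /PP.
  under eq_bigr do under eq_bigr do under eq_bigr do rewrite ffunE.
  rewrite !sumr_const !card_ord -!mulrnA /cc.
  have e3 : (n.+1 * (n.+1 * n.+1) = n.+1 ^ 3)%N by rewrite !expnS expn0 muln1.
  rewrite e3 -(mulr_natr ((n.+1 ^ 3)%:R^-1 : R)) mulVf // pnatr_eq0 -lt0n expn_gt0 //.
- by move=> *; apply: eq_bigr => *; rewrite /PP !ffunE.
- by move=> *; apply: eq_bigr => *; rewrite /PP !ffunE.
- by move=> *; apply: eq_bigr => *; apply: eq_bigr => *; rewrite /PP !ffunE.
- by move=> *; apply: eq_bigr => *; apply: eq_bigr => *; rewrite /PP !ffunE.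
Qed.

Definition eps (v : PT) : R := cc / (1 + \sum_j `|v j|).

Lemma eps_gt0 v : 0 < eps v.
Proof.
rewrite /eps divr_gt0 ?cc_gt0 //.
by rewrite ltr_pwDl // sumr_ge0.
Qed.

Lemma RC_pert v : sat v 0 -> RC (eps v *: v + uu).
Proof.
move=> hv; have [_ hu] := RC_uu; split; last first.
  by have := sat_lin (eps v) hv hu; rewrite mulr0 add0r.
move=> a b c x y z; rewrite PPlin /PP ffunE.
set i := ((a,b,c),(x,y,z)).
have hS : 0 <= \sum_j `|v j| by rewrite sumr_ge0.
have h1 : `|v i| <= \sum_j `|v j|.
  by rewrite (bigD1 i) //= lerDl sumr_ge0.
have he := eps_gt0 v.
have h2 : eps v * `|v i| <= cc.
  rewrite /eps mulrAC ler_pdivrMr ?ltr_pwDl //.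
  rewrite ler_pM2l ?cc_gt0 //; lra.
have h3 : - (eps v * `|v i|) <= eps v * v i.
  by apply: lerNnormlW; rewrite normrM (ger0_norm (ltW he)).
lra.
Qed.

End T6.

Unset Implicit Arguments.

Theorem mainTheorem2 (R : realType) (m n : nat) (hm : (2 <= m)%N) (hn : (2 <= n)%N) :
  affine_dim (@RC R m n)
    ((m * (n - 1) + 1) ^ 3 + m ^ 2 * (m - 1) * (n - 1) ^ 2 - 1)%N.
Proof.
case: m hm => // m hm; case: n hn => // n hn.
rewrite !subn1 /=.
exists (U R m n); split.
- move=> p q [_ hp] [_ hq]; apply/memU.
  have := sat_lin (-1) hq hp.
  by rewrite scaleN1r addrC mulN1r addNr.
- exists [seq (eps v *: v + uu R m n, uu R m n) | v <- vbasis (U R m n)]; split.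
  + move=> pq /mapP [v hv ->] /=; split; last exact: RC_uu.
    by apply: RC_pert; apply/memU; apply: vbasis_mem hv.
  + rewrite -map_comp /=.
    under eq_map do rewrite /= addrK.
    apply/eqP; rewrite eqEsubv; apply/andP; split.
    * rewrite -{1}(span_basis (vbasisP (U R m n))); apply/span_subvP => v hv.
      have -> : v = (eps v)^-1 *: (eps v *: v).
        by rewrite scalerA mulVf ?scale1r // gt_eqF // eps_gt0.
      by apply: memvZ; apply: memv_span; apply/mapP; exists v.
    * by apply/span_subvP => w /mapP [v hv ->]; apply: memvZ; apply: vbasis_mem.
- by rewrite dimU card_sig (count_fix hm hn) subn1.
Qed.
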